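(* Let $n\in\mathbb{N}$ and $M\models\mathrm{I}\Delta_0+\exp$. If there is a proper end extension $K$ of $M$ with $M\preccurlyeq_{\Sigma_{n+2}}K$ and $K\models M\text{-}\mathrm{I}\Sigma_{n+1}$, then $M\models\mathrm{WR}(\Sigma_{n+1}\wedge\Pi_{n+1})$.
   Context: $M\preccurlyeq_{\Sigma_k}K$: every $\Sigma_k$ formula with parameters from $M$ has the same truth value in $M$ and $K$; end extension: every element of $K\setminus M$ exceeds every element of $M$; proper: $K\neq M$. For an end extension $M\subseteq K$ of models of $\mathrm{I}\Delta_0+\exp$, $K\models M\text{-}\mathrm{I}\Sigma_{n+1}$ means: for every $\Sigma_{n+1}$ formula $\phi(x)$ with parameters from $K$ and every $a\in M$, $K\models\phi(0)\wedge\forall x<a(\phi(x)\to\phi(x+1))\to\forall x<a\,\phi(x)$. $\Sigma_{k}\wedge\Pi_{k}$ is the class of conjunctions of a $\Sigma_k$ and a $\Pi_k$ formula. For a formula $\phi(x,y)$ (possibly with further free variables), $\mathrm{WR}\phi$ is the universal closure of $\forall x\,\exists y<a\,\phi(x,y)\to\exists y<a\,\forall b\,\exists x>b\,\phi(x,y)$, and $\mathrm{WR}\Gamma=\mathrm{I}\Delta_0\cup\{\mathrm{WR}\phi:\phi\in\Gamma\}$. *)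

(* Defs.v *)
(* a deep embedding of first-order arithmetic in the
   language {0, 1, +, *, <} (equality interpreted as Leibniz equality). *)

Record structure := {
  dom :> Type;
  szero : dom;
  sone : dom;
  splus : dom -> dom -> dom;
  stimes : dom -> dom -> dom;
  slt : dom -> dom -> Prop
}.

Arguments szero {_}. Arguments sone {_}.
Arguments splus {_} _ _. Arguments stimes {_} _ _. Arguments slt {_} _ _.

(** * Syntax (de Bruijn indices) *)
Inductive term : Type :=
| tvar (i : nat)
| tzero
| tone
| tplus (t u : term)
| ttimes (t u : term).

Inductive form : Type :=
| fEq (t u : term)
| fLt (t u : term)
| fNot (p : form)
| fAnd (p q : form)
| fOr (p q : form)
| fImp (p q : form)
| fEx (p : form)              (* exists x, p   (x = variable 0 of p) *)
| fAll (p : form)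
| fBEx (t : term) (p : form)  (* exists x < t, p ; t is read in the outer scope *)
| fBAll (t : term) (p : form).

Definition scons {D : Type} (d : D) (e : nat -> D) : nat -> D :=
  fun i => match i with 0 => d | S j => e j end.

Fixpoint teval (M : structure) (e : nat -> M) (t : term) : M :=
  match t with
  | tvar i => e i
  | tzero => szero
  | tone => sone
  | tplus t u => splus (teval M e t) (teval M e u)
  | ttimes t u => stimes (teval M e t) (teval M e u)
  end.

Fixpoint sat (M : structure) (e : nat -> M) (p : form) : Prop :=
  match p with
  | fEq t u => teval M e t = teval M e u
  | fLt t u => slt (teval M e t) (teval M e u)
  | fNot p => ~ sat M e p
  | fAnd p q => sat M e p /\ sat M e q
  | fOr p q => sat M e p \/ sat M e q
  | fImp p q => sat M e p -> sat M e q
  | fEx p => exists d : M, sat M (scons d e) p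
  | fAll p => forall d : M, sat M (scons d e) p
  | fBEx t p => exists d : M, slt d (teval M e t) /\ sat M (scons d e) p
  | fBAll t p => forall d : M, slt d (teval M e t) -> sat M (scons d e) p
  end.

Inductive Delta0 : form -> Prop :=
| D0Eq t u : Delta0 (fEq t u)
| D0Lt t u : Delta0 (fLt t u)
| D0Not p : Delta0 p -> Delta0 (fNot p)
| D0And p q : Delta0 p -> Delta0 q -> Delta0 (fAnd p q)
| D0Or p q : Delta0 p -> Delta0 q -> Delta0 (fOr p q)
| D0Imp p q : Delta0 p -> Delta0 q -> Delta0 (fImp p q)
| D0BEx t p : Delta0 p -> Delta0 (fBEx t p)
| D0BAll t p : Delta0 p -> Delta0 (fBAll t p).

Inductive Sigma : nat -> form -> Prop :=
| Sigma0 p : Delta0 p -> Sigma 0 p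
| SigmaPi k p : Pi k p -> Sigma (S k) p
| SigmaEx k p : Sigma (S k) p -> Sigma (S k) (fEx p)
with Pi : nat -> form -> Prop :=
| Pi0 p : Delta0 p -> Pi 0 p
| PiSigma k p : Sigma k p -> Pi (S k) p
| PiAll k p : Pi (S k) p -> Pi (S k) (fAll p).

Definition succ {M : structure} (x : M) : M := splus x sone.

Definition basic_axioms (M : structure) : Prop :=
  (forall x : M, succ x <> szero) /\
  (forall x y : M, succ x = succ y -> x = y) /\
  (forall x : M, x <> szero -> exists y, x = succ y) /\
  (forall x : M, splus x szero = x) /\
  (forall x y : M, splus x (succ y) = succ (splus x y)) /\
  (forall x : M, stimes x szero = szero) /\
  (forall x y : M, stimes x (succ y) = splus (stimes x y) x) /\
  (forall x y : M, slt x y <-> exists z, splus (succ z) x = y).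

(* Induction axioms for Delta_0 formulas (variable 0 is the induction
   variable, all other variables are parameters). *)
Definition Delta0_induction (M : structure) : Prop :=
  forall p : form, Delta0 p -> forall e : nat -> M,
    sat M (scons szero e) p ->
    (forall x : M, sat M (scons x e) p -> sat M (scons (succ x) e) p) ->
    forall x : M, sat M (scons x e) p.

Definition model_IDelta0 (M : structure) : Prop :=
  basic_axioms M /\ Delta0_induction M.

(* Environment [x; y; z] (x = var 2, y = var 1, z = var 0), others := 0 *)
Definition env3 {M : structure} (x y z : M) : nat -> M :=
  scons z (scons y (scons x (fun _ => szero))).

(* exp: totality of exponentiation, whose graph is Delta_0-definable. *)
Definition exp_axiom (M : structure) : Prop :=
  exists E : form, Delta0 E /\
    (forall x y z w : M, sat M (env3 x y z) E -> sat M (env3 x y w) E -> z = w) /\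
    (forall x z : M, sat M (env3 x szero z) E <-> z = sone) /\
    (forall x y w : M, sat M (env3 x (succ y) w) E <->
                       exists z, sat M (env3 x y z) E /\ w = stimes z x) /\
    (forall x y : M, exists z, sat M (env3 x y z) E).

Definition model_IDelta0_exp (M : structure) : Prop :=
  model_IDelta0 M /\ exp_axiom M.

Record embedding (M K : structure) : Type := {
  emb :> M -> K;
  emb_inj : forall x y, emb x = emb y -> x = y;
  emb_zero : emb szero = szero;
  emb_one : emb sone = sone;
  emb_plus : forall x y, emb (splus x y) = splus (emb x) (emb y);
  emb_times : forall x y, emb (stimes x y) = stimes (emb x) (emb y);
  emb_lt : forall x y, slt x y <-> slt (emb x) (emb y)
}.

Arguments emb {M K} _ _.

Definition in_image {M K : structure} (f : embedding M K) (k : K) : Prop :=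
  exists m : M, emb f m = k.

Definition end_extension {M K : structure} (f : embedding M K) : Prop :=
  forall k : K, ~ in_image f k -> forall m : M, slt (emb f m) k.

Definition proper_extension {M K : structure} (f : embedding M K) : Prop :=
  exists k : K, ~ in_image f k.

Definition Sigma_elementary (k : nat) {M K : structure} (f : embedding M K) : Prop :=
  forall p : form, Sigma k p -> forall e : nat -> M,
    sat M e p <-> sat K (fun i => emb f (e i)) p.

Definition M_ISigma (k : nat) {M K : structure} (f : embedding M K) : Prop :=
  forall p : form, Sigma k p -> forall (e : nat -> K) (a : M),
    sat K (scons szero e) p ->
    (forall x : K, slt x (emb f a) -> sat K (scons x e) p -> sat K (scons (succ x) e) p) ->
    forall x : K, slt x (emb f a) -> sat K (scons x e) p.

(* WR phi, with phi(x,y): y = variable 0, x = variable 1, further variables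
   are parameters; a is a fresh variable. *)
Definition WR_holds (M : structure) (p : form) : Prop :=
  forall (e : nat -> M) (a : M),
    (forall x : M, exists y : M, slt y a /\ sat M (scons y (scons x e)) p) ->
    exists y : M, slt y a /\
      forall b : M, exists x : M, slt b x /\ sat M (scons y (scons x e)) p.

Definition WR_SigmaPi (k : nat) (M : structure) : Prop :=
  model_IDelta0 M /\
  forall p q : form, Sigma k p -> Pi k q -> WR_holds M (fAnd p q).

(* Main.v *)
Require Import Defs.
From Stdlib Require Import Arith Lia List Classical FunctionalExtensionality Ring ClassicalEpsilon.
Import ListNotations.


(** * Substitution *)
Fixpoint tsubst (s : nat -> term) (t : term) : term :=
  match t with
  | tvar i => s i
  | tzero => tzero
  | tone => tone
  | tplus t u => tplus (tsubst s t) (tsubst s u)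
  | ttimes t u => ttimes (tsubst s t) (tsubst s u)
  end.

Definition tren (xi : nat -> nat) (t : term) : term := tsubst (fun i => tvar (xi i)) t.

Definition sup (s : nat -> term) : nat -> term :=
  fun i => match i with 0 => tvar 0 | S j => tren S (s j) end.

Fixpoint subst (s : nat -> term) (p : form) : form :=
  match p with
  | fEq t u => fEq (tsubst s t) (tsubst s u)
  | fLt t u => fLt (tsubst s t) (tsubst s u)
  | fNot p => fNot (subst s p)
  | fAnd p q => fAnd (subst s p) (subst s q)
  | fOr p q => fOr (subst s p) (subst s q)
  | fImp p q => fImp (subst s p) (subst s q)
  | fEx p => fEx (subst (sup s) p)
  | fAll p => fAll (subst (sup s) p)
  | fBEx t p => fBEx (tsubst s t) (subst (sup s) p)
  | fBAll t p => fBAll (tsubst s t) (subst (sup s) p)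
  end.

Definition ren (xi : nat -> nat) (p : form) : form := subst (fun i => tvar (xi i)) p.

Lemma teval_subst (D : structure) (e : nat -> D) s t :
  teval D e (tsubst s t) = teval D (fun i => teval D e (s i)) t.
Proof. induction t; simpl; congruence. Qed.

Lemma teval_ext (D : structure) (e e' : nat -> D) t :
  (forall i, e i = e' i) -> teval D e t = teval D e' t.
Proof. intros H; induction t; simpl; congruence. Qed.

Lemma teval_tren (D : structure) (e : nat -> D) xi t :
  teval D e (tren xi t) = teval D (fun i => e (xi i)) t.
Proof. unfold tren. rewrite teval_subst. reflexivity. Qed.

Lemma sat_ext (D : structure) p : forall (e e' : nat -> D),
  (forall i, e i = e' i) -> (sat D e p <-> sat D e' p).
Proof.
  intros e e' H. replace e' with e. tauto. apply functional_extensionality; auto.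
Qed.

Lemma scons_sup (D : structure) (e : nat -> D) s d :
  (fun i => teval D (scons d e) (sup s i)) = scons d (fun i => teval D e (s i)).
Proof.
  apply functional_extensionality; intros [|i]; simpl; auto.
  unfold tren. rewrite teval_subst. apply teval_ext. intros j; reflexivity.
Qed.

Lemma sat_subst (D : structure) p : forall (e : nat -> D) s,
  sat D e (subst s p) <-> sat D (fun i => teval D e (s i)) p.
Proof.
  induction p; intros e s; simpl; rewrite ?teval_subst;
  repeat match goal with IH : forall _ _, _ <-> _ |- _ => setoid_rewrite IH end;
  try setoid_rewrite scons_sup; tauto.
Qed.

Lemma sat_ren (D : structure) p (e : nat -> D) xi :
  sat D e (ren xi p) <-> sat D (fun i => e (xi i)) p.
Proof. unfold ren. rewrite sat_subst. simpl. tauto. Qed.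

Lemma Delta0_subst p : Delta0 p -> forall s, Delta0 (subst s p).
Proof. induction 1; intros s; simpl; constructor; auto. Qed.

Scheme Sigma_mut := Induction for Sigma Sort Prop
with Pi_mut := Induction for Pi Sort Prop.

Lemma SP_subst :
  (forall k p, Sigma k p -> forall s, Sigma k (subst s p)) /\
  (forall k p, Pi k p -> forall s, Pi k (subst s p)).
Proof.
  split; [apply (Sigma_mut (fun k p _ => forall s, Sigma k (subst s p)) (fun k p _ => forall s, Pi k (subst s p)))
        | apply (Pi_mut (fun k p _ => forall s, Sigma k (subst s p)) (fun k p _ => forall s, Pi k (subst s p)))];
  intros; simpl; try constructor; auto; apply Delta0_subst; auto.
Qed.

Lemma Sigma_subst k p s : Sigma k p -> Sigma k (subst s p).
Proof. intros H; apply (proj1 SP_subst); auto. Qed.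
Lemma Pi_subst k p s : Pi k p -> Pi k (subst s p).
Proof. intros H; apply (proj2 SP_subst); auto. Qed.

Lemma SP_lift :
  (forall k p, Sigma k p -> Sigma (S k) p /\ Pi (S k) p) /\
  (forall k p, Pi k p -> Pi (S k) p /\ Sigma (S k) p).
Proof.
  split; [apply (Sigma_mut (fun k p _ => Sigma (S k) p /\ Pi (S k) p) (fun k p _ => Pi (S k) p /\ Sigma (S k) p))
        | apply (Pi_mut (fun k p _ => Sigma (S k) p /\ Pi (S k) p) (fun k p _ => Pi (S k) p /\ Sigma (S k) p))];
  intros; repeat match goal with H : _ /\ _ |- _ => destruct H end;
  split; try (constructor; auto; fail);
  try (apply PiSigma; constructor; auto; fail);
  try (apply SigmaPi; constructor; auto; fail);
  try (apply SigmaPi; apply PiSigma; constructor; auto; fail);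
  try (apply PiSigma; apply SigmaPi; constructor; auto; fail).
Qed.

Lemma Sigma_S k p : Sigma k p -> Sigma (S k) p.
Proof. intros H; apply (proj1 SP_lift); auto. Qed.
Lemma Pi_S k p : Pi k p -> Pi (S k) p.
Proof. intros H; apply (proj2 SP_lift); auto. Qed.
Lemma Sigma_Pi_S k p : Sigma k p -> Pi (S k) p.
Proof. intros H; apply (proj1 SP_lift); auto. Qed.
Lemma Pi_Sigma_S k p : Pi k p -> Sigma (S k) p.
Proof. intros H; apply (proj2 SP_lift); auto. Qed.

Lemma Sigma_le k k' p : k <= k' -> Sigma k p -> Sigma k' p.
Proof. induction 1; auto using Sigma_S. Qed.
Lemma Pi_le k k' p : k <= k' -> Pi k p -> Pi k' p.
Proof. induction 1; auto using Pi_S. Qed.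
Lemma D0_Sigma k p : Delta0 p -> Sigma k p.
Proof. intros H. apply (Sigma_le 0); [lia|constructor; auto]. Qed.
Lemma D0_Pi k p : Delta0 p -> Pi k p.
Proof. intros H. apply (Pi_le 0); [lia|constructor; auto]. Qed.


Definition app_env {D : Type} (l : list D) (e : nat -> D) : nat -> D := fold_right scons e l.

Lemma app_env_plus {D : Type} (l : list D) e i : app_env l e (i + length l) = e i.
Proof.
  induction l; simpl. f_equal; lia. replace (i + S (length l)) with (S (i + length l)) by lia. simpl. auto.
Qed.

Lemma app_env_lt {D : Type} (l : list D) e e' i : i < length l -> app_env l e i = app_env l e' i.
Proof.
  revert i; induction l; simpl; intros i H. lia. destruct i; simpl; auto. apply IHl; lia.
Qed.

Lemma app_env_snoc {D : Type} (l : list D) d e : app_env l (scons d e) = app_env (l ++ [d]) e.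
Proof. unfold app_env. rewrite fold_right_app. reflexivity. Qed.

Fixpoint exs (j : nat) (p : form) : form := match j with 0 => p | S j => fEx (exs j p) end.
Fixpoint alls (j : nat) (p : form) : form := match j with 0 => p | S j => fAll (alls j p) end.

Lemma sat_exs (D : structure) j p : forall e,
  sat D e (exs j p) <-> exists l : list D, length l = j /\ sat D (app_env l e) p.
Proof.
  induction j; intros e; simpl.
  - split. intros H; exists []; auto. intros [l [Hl H]]. destruct l; simpl in *; auto; lia.
  - split.
    + intros [d Hd]. apply IHj in Hd. destruct Hd as [l [Hl H]]. exists (l ++ [d]).
      rewrite length_app; simpl. split. lia. rewrite <- app_env_snoc; auto.
    + intros [l [Hl H]]. destruct (exists_last (l:=l)) as [l' [d Hd]]. destruct l; simpl in Hl; [lia|discriminate].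
      subst l. exists d. apply IHj. exists l'. rewrite length_app in Hl; simpl in Hl. split. lia.
      rewrite app_env_snoc; auto.
Qed.

Lemma sat_alls (D : structure) j p : forall e,
  sat D e (alls j p) <-> forall l : list D, length l = j -> sat D (app_env l e) p.
Proof.
  induction j; intros e; simpl.
  - split. intros H l Hl. destruct l; simpl in *; auto; lia. intros H; apply (H []); auto.
  - split.
    + intros H l Hl. destruct (exists_last (l:=l)) as [l' [d Hd]]. destruct l; simpl in Hl; [lia|discriminate].
      subst l. rewrite length_app in Hl; simpl in Hl. rewrite <- app_env_snoc. apply IHj; auto. lia.
    + intros H d. apply IHj. intros l Hl. rewrite app_env_snoc. apply H. rewrite length_app; simpl; lia.
Qed.

Lemma Sigma_exs k j p : Pi k p -> Sigma (S k) (exs j p).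
Proof. intros H; induction j; simpl. apply SigmaPi; auto. apply SigmaEx; auto. Qed.
Lemma Pi_alls k j p : Sigma k p -> Pi (S k) (alls j p).
Proof. intros H; induction j; simpl. apply PiSigma; auto. apply PiAll; auto. Qed.

Lemma Sigma_nf k p : Sigma (S k) p -> exists j p0, p = exs j p0 /\ Pi k p0.
Proof.
  intros H. remember (S k) as k'. revert k Heqk'.
  apply (Sigma_mut (fun k' p _ => forall k, k' = S k -> exists j p0, p = exs j p0 /\ Pi k p0) (fun _ _ _ => True)); auto.
  - intros. discriminate.
  - intros k0 p0 Hp _ k1 E. injection E; intros; subst. exists 0, p0; auto.
  - intros k0 p0 Hp IH k1 E. destruct (IH k1 E) as [j [p1 [-> Hp1]]]. exists (S j), p1; auto.
Qed.

Lemma Pi_nf k p : Pi (S k) p -> exists j p0, p = alls j p0 /\ Sigma k p0.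
Proof.
  intros H. remember (S k) as k'. revert k Heqk'.
  apply (Pi_mut (fun _ _ _ => True) (fun k' p _ => forall k, k' = S k -> exists j p0, p = alls j p0 /\ Sigma k p0)); auto.
  - intros. discriminate.
  - intros k0 p0 Hp _ k1 E. injection E; intros; subst. exists 0, p0; auto.
  - intros k0 p0 Hp IH k1 E. destruct (IH k1 E) as [j [p1 [-> Hp1]]]. exists (S j), p1; auto.
Qed.

Lemma SP_neg :
  (forall k p, Sigma k p -> exists p', Pi k p' /\ forall D e, sat D e p' <-> ~ sat D e p) /\
  (forall k p, Pi k p -> exists p', Sigma k p' /\ forall D e, sat D e p' <-> ~ sat D e p).
Proof.
  split; [apply (Sigma_mut (fun k p _ => exists p', Pi k p' /\ forall D e, sat D e p' <-> ~ sat D e p)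
                           (fun k p _ => exists p', Sigma k p' /\ forall D e, sat D e p' <-> ~ sat D e p))
        | apply (Pi_mut (fun k p _ => exists p', Pi k p' /\ forall D e, sat D e p' <-> ~ sat D e p)
                           (fun k p _ => exists p', Sigma k p' /\ forall D e, sat D e p' <-> ~ sat D e p))].
  all: intros.
  all: try (exists (fNot p); split; [do 2 constructor; auto | simpl; tauto]).
  all: repeat match goal with H : exists _, _ |- _ => destruct H as [? [? ?]] end.
  all: try (eexists; split; [constructor; eassumption|]; intros; auto; fail).
  all: try (match goal with Hx : forall D e, sat D e ?x <-> _ |- exists p', Pi _ p' /\ _ =>
         exists (fAll x); split; [apply PiAll; auto|]; intros D e; simpl; setoid_rewrite Hx; firstorder end; fail).
  all: match goal with Hx : forall D e, sat D e ?x <-> _ |- exists p', Sigma _ p' /\ _ =>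
         exists (fEx x); split; [apply SigmaEx; auto|]; intros D e; simpl; setoid_rewrite Hx end.
  all: split; [intros [d Hd] Hn; apply Hd; auto | intros Hn; apply NNPP; intros Hc; apply Hn; intros d; apply NNPP; intros Hd; apply Hc; exists d; auto].
Qed.

Lemma Sigma_neg k p : Sigma k p -> exists p', Pi k p' /\ forall D e, sat D e p' <-> ~ sat D e p.
Proof. apply SP_neg. Qed.
Lemma Pi_neg k p : Pi k p -> exists p', Sigma k p' /\ forall D e, sat D e p' <-> ~ sat D e p.
Proof. apply SP_neg. Qed.


Definition shq (j l : nat) : nat -> nat := fun i => if i <? l then i else i + j.

Lemma env_p {D : Type} (u v : list D) e :
  (fun i => app_env v (app_env u e) (i + length v)) = app_env u e.
Proof. apply functional_extensionality; intros i. apply app_env_plus. Qed.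

Lemma env_q {D : Type} (u v : list D) e :
  (fun i => app_env v (app_env u e) (shq (length u) (length v) i)) = app_env v e.
Proof.
  apply functional_extensionality; intros i. unfold shq.
  destruct (Nat.ltb_spec i (length v)).
  - apply app_env_lt; auto.
  - replace i with ((i - length v) + length v) by lia.
    replace (i - length v + length v + length u) with ((i - length v + length u) + length v) by lia.
    rewrite !app_env_plus. reflexivity.
Qed.

Lemma list_of_len {D : structure} (n : nat) : exists l : list D, length l = n.
Proof. exists (repeat szero n). apply repeat_length. Qed.

Lemma Sigma_exs' k j p : Sigma (S k) p -> Sigma (S k) (exs j p).
Proof. intros H; induction j; simpl; auto. apply SigmaEx; auto. Qed.
Lemma Pi_alls' k j p : Pi (S k) p -> Pi (S k) (alls j p).
Proof. intros H; induction j; simpl; auto. apply PiAll; auto. Qed.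

Definition conn_closed (C : form -> Prop) :=
  forall p q, C p -> C q ->
    (exists r, C r /\ forall D e, sat D e r <-> sat D e p /\ sat D e q) /\
    (exists r, C r /\ forall D e, sat D e r <-> sat D e p \/ sat D e q).

Lemma SP_conn k : conn_closed (Sigma k) /\ conn_closed (Pi k).
Proof.
  induction k.
  - split; intros p q Hp Hq; inversion Hp; inversion Hq; subst; split.
    all: try (exists (fAnd p q); split; [constructor; constructor; auto | simpl; tauto]).
    all: exists (fOr p q); split; [constructor; constructor; auto | simpl; tauto].
  - destruct IHk as [IHs IHp]. split; intros p q Hp Hq.
    + apply Sigma_nf in Hp as [j [p0 [-> Hp0]]]. apply Sigma_nf in Hq as [l [q0 [-> Hq0]]].
      assert (Hp1 : Pi k (ren (fun i => i + l) p0)) by (apply Pi_subst; auto).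
      assert (Hq1 : Pi k (ren (shq j l) q0)) by (apply Pi_subst; auto).
      destruct (IHp _ _ Hp1 Hq1) as [[ra [Ha Hra]] [ro [Ho Hro]]].
      split; [exists (exs j (exs l ra)) | exists (exs j (exs l ro))]; split.
      1,3: apply Sigma_exs'; apply Sigma_exs'; apply SigmaPi; auto.
      * intros D e. rewrite !sat_exs. setoid_rewrite sat_exs. setoid_rewrite Hra. setoid_rewrite sat_ren.
        split.
        -- intros [u [Hu [v [Hv [H1 H2]]]]]. subst. 
           rewrite env_p in H1. rewrite env_q in H2. split; eauto.
        -- intros [[u [Hu H1]] [v [Hv H2]]]. exists u; split; auto. exists v; split; auto.
           subst. rewrite env_p, env_q. auto.
      * intros D e. rewrite !sat_exs. setoid_rewrite sat_exs. setoid_rewrite Hro. setoid_rewrite sat_ren.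
        split.
        -- intros [u [Hu [v [Hv [H1|H2]]]]]; subst.
           ++ rewrite env_p in H1. left; eauto.
           ++ rewrite env_q in H2. right; eauto.
        -- intros [[u [Hu H1]]|[v [Hv H2]]].
           ++ destruct (list_of_len (D:=D) l) as [v Hv]. exists u; split; auto. exists v; split; auto.
              left. subst. rewrite env_p. auto.
           ++ destruct (list_of_len (D:=D) j) as [u Hu]. exists u; split; auto. exists v; split; auto.
              right. subst. rewrite env_q. auto.
    + apply Pi_nf in Hp as [j [p0 [-> Hp0]]]. apply Pi_nf in Hq as [l [q0 [-> Hq0]]].
      assert (Hp1 : Sigma k (ren (fun i => i + l) p0)) by (apply Sigma_subst; auto).
      assert (Hq1 : Sigma k (ren (shq j l) q0)) by (apply Sigma_subst; auto).
      destruct (IHs _ _ Hp1 Hq1) as [[ra [Ha Hra]] [ro [Ho Hro]]].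
      split; [exists (alls j (alls l ra)) | exists (alls j (alls l ro))]; split.
      1,3: apply Pi_alls'; apply Pi_alls'; apply PiSigma; auto.
      * intros D e. rewrite !sat_alls. setoid_rewrite sat_alls. setoid_rewrite Hra. setoid_rewrite sat_ren.
        split.
        -- intros H. split.
           ++ intros u Hu. destruct (list_of_len (D:=D) l) as [v Hv]. specialize (H u Hu v Hv) as [H1 _].
              subst. rewrite env_p in H1. auto.
           ++ intros v Hv. destruct (list_of_len (D:=D) j) as [u Hu]. specialize (H u Hu v Hv) as [_ H2].
              subst. rewrite env_q in H2. auto.
        -- intros [H1 H2] u Hu v Hv. subst. rewrite env_p, env_q. auto.
      * intros D e. rewrite !sat_alls. setoid_rewrite sat_alls. setoid_rewrite Hro. setoid_rewrite sat_ren.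
        split.
        -- intros H. destruct (classic (forall u : list D, length u = j -> sat D (app_env u e) p0)) as [Hc|Hc]; [left; auto|right].
           apply not_all_ex_not in Hc as [u Hu]. apply imply_to_and in Hu as [Hu1 Hu2].
           intros v Hv. specialize (H u Hu1 v Hv). subst. rewrite env_p, env_q in H.
           destruct H; auto. contradiction.
        -- intros [H1|H2] u Hu v Hv; subst; rewrite env_p, env_q; auto.
Qed.


Definition Pred := forall D : structure, (nat -> D) -> Prop.
Definition D0Def (P : Pred) := exists r, Delta0 r /\ forall D e, sat D e r <-> P D e.
Definition SDef k (P : Pred) := exists r, Sigma k r /\ forall D e, sat D e r <-> P D e.
Definition PDef k (P : Pred) := exists r, Pi k r /\ forall D e, sat D e r <-> P D e.

Lemma SDef_ext k (P Q : Pred) : SDef k P -> (forall D e, P D e <-> Q D e) -> SDef k Q.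
Proof. intros [r [H1 H2]] H. exists r; split; auto. intros; rewrite H2; auto. Qed.
Lemma PDef_ext k (P Q : Pred) : PDef k P -> (forall D e, P D e <-> Q D e) -> PDef k Q.
Proof. intros [r [H1 H2]] H. exists r; split; auto. intros; rewrite H2; auto. Qed.
Lemma D0Def_ext (P Q : Pred) : D0Def P -> (forall D e, P D e <-> Q D e) -> D0Def Q.
Proof. intros [r [H1 H2]] H. exists r; split; auto. intros; rewrite H2; auto. Qed.

Lemma D0_SDef k P : D0Def P -> SDef k P.
Proof. intros [r [H1 H2]]. exists r; split; auto. apply D0_Sigma; auto. Qed.
Lemma D0_PDef k P : D0Def P -> PDef k P.
Proof. intros [r [H1 H2]]. exists r; split; auto. apply D0_Pi; auto. Qed.
Lemma SDef_S k P : SDef k P -> SDef (S k) P.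
Proof. intros [r [H1 H2]]. exists r; split; auto. apply Sigma_S; auto. Qed.
Lemma PDef_S k P : PDef k P -> PDef (S k) P.
Proof. intros [r [H1 H2]]. exists r; split; auto. apply Pi_S; auto. Qed.
Lemma SDef_PDef_S k P : SDef k P -> PDef (S k) P.
Proof. intros [r [H1 H2]]. exists r; split; auto. apply Sigma_Pi_S; auto. Qed.
Lemma PDef_SDef_S k P : PDef k P -> SDef (S k) P.
Proof. intros [r [H1 H2]]. exists r; split; auto. apply Pi_Sigma_S; auto. Qed.
Lemma SDef_le k k' P : k <= k' -> SDef k P -> SDef k' P.
Proof. induction 1; auto using SDef_S. Qed.
Lemma PDef_le k k' P : k <= k' -> PDef k P -> PDef k' P.
Proof. induction 1; auto using PDef_S. Qed.

Lemma D0_form p (s : nat -> term) : Delta0 p -> D0Def (fun D e => sat D (fun i => teval D e (s i)) p).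
Proof. intros H. exists (subst s p); split. apply Delta0_subst; auto. intros; apply sat_subst. Qed.
Lemma SDef_form k p (s : nat -> term) : Sigma k p -> SDef k (fun D e => sat D (fun i => teval D e (s i)) p).
Proof. intros H. exists (subst s p); split. apply Sigma_subst; auto. intros; apply sat_subst. Qed.
Lemma PDef_form k p (s : nat -> term) : Pi k p -> PDef k (fun D e => sat D (fun i => teval D e (s i)) p).
Proof. intros H. exists (subst s p); split. apply Pi_subst; auto. intros; apply sat_subst. Qed.
Lemma D0_eq t u : D0Def (fun D e => teval D e t = teval D e u).
Proof. exists (fEq t u); split; [constructor|reflexivity]. Qed.
Lemma D0_lt t u : D0Def (fun D e => slt (teval D e t) (teval D e u)).
Proof. exists (fLt t u); split; [constructor|reflexivity]. Qed.

Lemma D0_not P : D0Def P -> D0Def (fun D e => ~ P D e).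
Proof. intros [r [H1 H2]]. exists (fNot r); split. constructor; auto. intros; simpl; rewrite H2; tauto. Qed.
Lemma D0_and P Q : D0Def P -> D0Def Q -> D0Def (fun D e => P D e /\ Q D e).
Proof. intros [r [H1 H2]] [r' [H1' H2']]. exists (fAnd r r'); split. constructor; auto. intros; simpl; rewrite H2, H2'; tauto. Qed.
Lemma D0_or P Q : D0Def P -> D0Def Q -> D0Def (fun D e => P D e \/ Q D e).
Proof. intros [r [H1 H2]] [r' [H1' H2']]. exists (fOr r r'); split. constructor; auto. intros; simpl; rewrite H2, H2'; tauto. Qed.
Lemma D0_imp P Q : D0Def P -> D0Def Q -> D0Def (fun D e => P D e -> Q D e).
Proof. intros [r [H1 H2]] [r' [H1' H2']]. exists (fImp r r'); split. constructor; auto. intros; simpl; rewrite H2, H2'; tauto. Qed.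
Lemma D0_bex t P : D0Def P -> D0Def (fun D e => exists x, slt x (teval D e t) /\ P D (scons x e)).
Proof. intros [r [H1 H2]]. exists (fBEx t r); split. constructor; auto. intros; simpl. setoid_rewrite H2; tauto. Qed.
Lemma D0_ball t P : D0Def P -> D0Def (fun D e => forall x, slt x (teval D e t) -> P D (scons x e)).
Proof. intros [r [H1 H2]]. exists (fBAll t r); split. constructor; auto. intros; simpl. setoid_rewrite H2; tauto. Qed.

Lemma SDef_and k P Q : SDef k P -> SDef k Q -> SDef k (fun D e => P D e /\ Q D e).
Proof.
  intros [r [H1 H2]] [r' [H1' H2']]. destruct (proj1 (SP_conn k) r r' H1 H1') as [[x [Hx Hx']] _].
  exists x; split; auto. intros; rewrite Hx', H2, H2'; tauto.
Qed.
Lemma SDef_or k P Q : SDef k P -> SDef k Q -> SDef k (fun D e => P D e \/ Q D e).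
Proof.
  intros [r [H1 H2]] [r' [H1' H2']]. destruct (proj1 (SP_conn k) r r' H1 H1') as [_ [x [Hx Hx']]].
  exists x; split; auto. intros; rewrite Hx', H2, H2'; tauto.
Qed.
Lemma PDef_and k P Q : PDef k P -> PDef k Q -> PDef k (fun D e => P D e /\ Q D e).
Proof.
  intros [r [H1 H2]] [r' [H1' H2']]. destruct (proj2 (SP_conn k) r r' H1 H1') as [[x [Hx Hx']] _].
  exists x; split; auto. intros; rewrite Hx', H2, H2'; tauto.
Qed.
Lemma PDef_or k P Q : PDef k P -> PDef k Q -> PDef k (fun D e => P D e \/ Q D e).
Proof.
  intros [r [H1 H2]] [r' [H1' H2']]. destruct (proj2 (SP_conn k) r r' H1 H1') as [_ [x [Hx Hx']]].
  exists x; split; auto. intros; rewrite Hx', H2, H2'; tauto.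
Qed.
Lemma SDef_not k P : PDef k P -> SDef k (fun D e => ~ P D e).
Proof.
  intros [r [H1 H2]]. destruct (Pi_neg k r H1) as [x [Hx Hx']]. exists x; split; auto.
  intros; rewrite Hx', H2; tauto.
Qed.
Lemma PDef_not k P : SDef k P -> PDef k (fun D e => ~ P D e).
Proof.
  intros [r [H1 H2]]. destruct (Sigma_neg k r H1) as [x [Hx Hx']]. exists x; split; auto.
  intros; rewrite Hx', H2; tauto.
Qed.
Lemma SDef_imp k P Q : PDef k P -> SDef k Q -> SDef k (fun D e => P D e -> Q D e).
Proof.
  intros HP HQ. eapply SDef_ext. apply SDef_or. apply SDef_not; eauto. eauto.
  intros D e; split. intros [H|H] H'; tauto. intros H. destruct (classic (P D e)); tauto.
Qed.
Lemma PDef_imp k P Q : SDef k P -> PDef k Q -> PDef k (fun D e => P D e -> Q D e).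
Proof.
  intros HP HQ. eapply PDef_ext. apply PDef_or. apply PDef_not; eauto. eauto.
  intros D e; split. intros [H|H] H'; tauto. intros H. destruct (classic (P D e)); tauto.
Qed.

Lemma SDef_ex k P : SDef (S k) P -> SDef (S k) (fun D e => exists x, P D (scons x e)).
Proof. intros [r [H1 H2]]. exists (fEx r); split. apply SigmaEx; auto. intros; simpl. setoid_rewrite H2. tauto. Qed.
Lemma PDef_all k P : PDef (S k) P -> PDef (S k) (fun D e => forall x, P D (scons x e)).
Proof. intros [r [H1 H2]]. exists (fAll r); split. apply PiAll; auto. intros; simpl. setoid_rewrite H2. tauto. Qed.

Lemma teval_shift (D : structure) (e : nat -> D) x t : teval D (scons x e) (tren S t) = teval D e t.
Proof. rewrite teval_tren. reflexivity. Qed.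

Lemma SDef_bex k t P : SDef k P -> SDef k (fun D e => exists x, slt x (teval D e t) /\ P D (scons x e)).
Proof.
  destruct k.
  - intros [r [H1 H2]]. inversion H1; subst. exists (fBEx t r); split. constructor; constructor; auto.
    intros; simpl; setoid_rewrite H2; tauto.
  - intros HP. eapply SDef_ext. apply SDef_ex. apply SDef_and. apply D0_SDef. apply (D0_lt (tvar 0) (tren S t)). apply HP.
    intros D e. simpl. setoid_rewrite teval_shift. tauto.
Qed.
Lemma PDef_ball k t P : PDef k P -> PDef k (fun D e => forall x, slt x (teval D e t) -> P D (scons x e)).
Proof.
  destruct k.
  - intros [r [H1 H2]]. inversion H1; subst. exists (fBAll t r); split. constructor; constructor; auto.
    intros; simpl; setoid_rewrite H2; tauto.
  - intros HP. eapply PDef_ext. apply PDef_all. apply PDef_imp. apply D0_SDef. apply (D0_lt (tvar 0) (tren S t)). apply HP.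
    intros D e. simpl. setoid_rewrite teval_shift. tauto.
Qed.


Section Arith.
Variable D : structure.
Hypothesis HD : model_IDelta0 D.

Local Notation "x + y" := (splus x y).
Local Notation "x * y" := (stimes x y).
Local Notation "x < y" := (slt x y).
Local Notation "0" := (@szero D).
Local Notation "1" := (@sone D).

Lemma Q1 (x : D) : succ x <> 0. Proof. apply HD. Qed.
Lemma Q2 (x y : D) : succ x = succ y -> x = y. Proof. apply HD. Qed.
Lemma Q3 (x : D) : x <> 0 -> exists y, x = succ y. Proof. apply HD. Qed.
Lemma Q4 (x : D) : x + 0 = x. Proof. apply HD. Qed.
Lemma Q5 (x y : D) : x + succ y = succ (x + y). Proof. apply HD. Qed.
Lemma Q6 (x : D) : x * 0 = 0. Proof. apply HD. Qed.
Lemma Q7 (x y : D) : x * succ y = x * y + x. Proof. apply HD. Qed.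
Lemma Q8 (x y : D) : x < y <-> exists z, succ z + x = y. Proof. apply HD. Qed.

Lemma ind (p : form) : Delta0 p -> forall e : nat -> D,
  sat D (scons 0 e) p -> (forall x, sat D (scons x e) p -> sat D (scons (succ x) e) p) ->
  forall x, sat D (scons x e) p.
Proof. intros Hp e; apply (proj2 HD p Hp e). Qed.

Definition z0 : nat -> D := fun _ => 0.

Lemma add_0_l (x : D) : 0 + x = x.
Proof.
  revert x. apply (ind (fEq (tplus tzero (tvar 0)) (tvar 0)) ltac:(repeat constructor) z0); simpl.
  apply Q4. intros x H. rewrite Q5. rewrite H. reflexivity.
Qed.

Lemma succ_eq (x : D) : succ x = x + 1. Proof. reflexivity. Qed.

Lemma add_succ_l (x y : D) : succ x + y = succ (x + y).
Proof.
  revert y. apply (ind (fEq (tplus (tplus (tvar 1) tone) (tvar 0)) (tplus (tplus (tvar 1) (tvar 0)) tone)) ltac:(repeat constructor) (scons x z0)); simpl.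
  rewrite !Q4. reflexivity. intros y H. fold (succ x) (succ y) (succ (x + y)) in *.
  rewrite !Q5, H. reflexivity.
Qed.

Lemma add_comm (x y : D) : x + y = y + x.
Proof.
  revert y. apply (ind (fEq (tplus (tvar 1) (tvar 0)) (tplus (tvar 0) (tvar 1))) ltac:(repeat constructor) (scons x z0)); simpl.
  rewrite Q4, add_0_l. reflexivity. intros y H. fold (succ y). rewrite Q5, add_succ_l, H. reflexivity.
Qed.

Lemma add_assoc (x y z : D) : x + (y + z) = (x + y) + z.
Proof.
  revert z. apply (ind (fEq (tplus (tvar 2) (tplus (tvar 1) (tvar 0))) (tplus (tplus (tvar 2) (tvar 1)) (tvar 0))) ltac:(repeat constructor) (scons y (scons x z0))); simpl.
  rewrite !Q4. reflexivity. intros z H. fold (succ z). rewrite !Q5, H. reflexivity.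
Qed.

Lemma mul_0_l (x : D) : 0 * x = 0.
Proof.
  revert x. apply (ind (fEq (ttimes tzero (tvar 0)) tzero) ltac:(repeat constructor) z0); simpl.
  apply Q6. intros x H. fold (succ x). rewrite Q7, H, Q4. reflexivity.
Qed.

Lemma mul_succ_l (x y : D) : succ x * y = x * y + y.
Proof.
  revert y. apply (ind (fEq (ttimes (tplus (tvar 1) tone) (tvar 0)) (tplus (ttimes (tvar 1) (tvar 0)) (tvar 0))) ltac:(repeat constructor) (scons x z0)); simpl.
  rewrite !Q6, Q4. reflexivity. intros y H. fold (succ x) (succ y) in *. rewrite !Q7, H.
  unfold succ. rewrite <- !add_assoc. f_equal. rewrite (add_comm y (x + 1)). rewrite <- add_assoc.
  f_equal. apply add_comm.
Qed.

Lemma mul_comm (x y : D) : x * y = y * x.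
Proof.
  revert y. apply (ind (fEq (ttimes (tvar 1) (tvar 0)) (ttimes (tvar 0) (tvar 1))) ltac:(repeat constructor) (scons x z0)); simpl.
  rewrite Q6, mul_0_l. reflexivity. intros y H. fold (succ y). rewrite Q7, mul_succ_l, H. reflexivity.
Qed.

Lemma mul_add_distr_l (x y z : D) : x * (y + z) = x * y + x * z.
Proof.
  revert z. apply (ind (fEq (ttimes (tvar 2) (tplus (tvar 1) (tvar 0))) (tplus (ttimes (tvar 2) (tvar 1)) (ttimes (tvar 2) (tvar 0)))) ltac:(repeat constructor) (scons y (scons x z0))); simpl.
  rewrite Q4, Q6, Q4. reflexivity. intros z H. fold (succ z). rewrite Q5, !Q7, H. symmetry; apply add_assoc.
Qed.

Lemma mul_assoc (x y z : D) : x * (y * z) = (x * y) * z.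
Proof.
  revert z. apply (ind (fEq (ttimes (tvar 2) (ttimes (tvar 1) (tvar 0))) (ttimes (ttimes (tvar 2) (tvar 1)) (tvar 0))) ltac:(repeat constructor) (scons y (scons x z0))); simpl.
  rewrite !Q6. reflexivity. intros z H. fold (succ z). rewrite !Q7, mul_add_distr_l, H. reflexivity.
Qed.

Lemma mul_1_l (x : D) : 1 * x = x.
Proof.
  replace 1 with (succ 0) by (unfold succ; apply add_0_l). rewrite mul_succ_l, mul_0_l. apply add_0_l.
Qed.

Lemma SRth : semi_ring_theory (R:=D) 0 1 splus stimes eq.
Proof.
  constructor; auto using add_0_l, add_comm, add_assoc, mul_1_l, mul_0_l, mul_comm, mul_assoc.
  intros a b c. rewrite mul_comm, mul_add_distr_l, !(mul_comm c). reflexivity.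
Qed.

Add Ring DRing : SRth.

Lemma add_cancel_r (x y z : D) : x + z = y + z -> x = y.
Proof.
  revert z. apply (ind (fImp (fEq (tplus (tvar 2) (tvar 0)) (tplus (tvar 1) (tvar 0))) (fEq (tvar 2) (tvar 1))) ltac:(repeat constructor) (scons y (scons x z0))); simpl.
  rewrite !Q4; auto. intros z H E. apply H. fold (succ z) in E. rewrite !Q5 in E. apply Q2; auto.
Qed.
Lemma add_cancel_l (x y z : D) : z + x = z + y -> x = y.
Proof. rewrite !(add_comm z). apply add_cancel_r. Qed.

Lemma add_eq_0 (x y : D) : x + y = 0 -> x = 0 /\ y = 0.
Proof.
  intros H. destruct (classic (y = 0)) as [->|Hy]. rewrite Q4 in H; auto.
  destruct (Q3 y Hy) as [y' ->]. rewrite Q5 in H. apply Q1 in H. contradiction.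
Qed.

Lemma lt_def (x y : D) : x < y <-> exists z, x + z + 1 = y.
Proof.
  rewrite Q8. split; intros [z Hz]; exists z; rewrite <- Hz; unfold succ; ring.
Qed.

Lemma lt_irrefl (x : D) : ~ x < x.
Proof.
  rewrite lt_def. intros [z Hz]. replace x with (x + 0) in Hz at 2 by ring.
  rewrite <- add_assoc in Hz. apply add_cancel_l in Hz. apply (Q1 z). exact Hz.
Qed.

Lemma lt_trans (x y z : D) : x < y -> y < z -> x < z.
Proof.
  rewrite !lt_def. intros [a Ha] [b Hb]. exists (a + b + 1). rewrite <- Hb, <- Ha. ring.
Qed.

Lemma not_lt_0 (x : D) : ~ x < 0.
Proof. rewrite lt_def. intros [z Hz]. apply (Q1 (x + z)). exact Hz. Qed.

Lemma lt_succ_r (x y : D) : x < y + 1 <-> x < y \/ x = y.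
Proof.
  rewrite !lt_def. split.
  - intros [z Hz]. apply (add_cancel_r _ _ 1) in Hz. destruct (classic (z = 0)) as [->|Hn].
    right. rewrite <- Hz; ring. destruct (Q3 z Hn) as [z' ->]. left; exists z'. rewrite <- Hz. unfold succ; ring.
  - intros [[z Hz]| ->]. exists (z + 1). rewrite <- Hz; ring. exists 0; ring.
Qed.

Lemma lt_add_pos (x y : D) : 0 < y -> x < x + y.
Proof. rewrite !lt_def. intros [z Hz]. exists z. rewrite <- Hz. ring. Qed.

Lemma lt_succ (x : D) : x < x + 1.
Proof. rewrite lt_def. exists 0. ring. Qed.

Lemma lt_0_succ (x : D) : 0 < x + 1.
Proof. rewrite lt_def. exists x. ring. Qed.

Lemma lt_total (x y : D) : x < y \/ x = y \/ y < x.
Proof.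
  revert y. apply (ind (fOr (fLt (tvar 1) (tvar 0)) (fOr (fEq (tvar 1) (tvar 0)) (fLt (tvar 0) (tvar 1)))) ltac:(repeat constructor) (scons x z0)); simpl.
  - destruct (classic (x = 0)) as [->|Hn]. auto. destruct (Q3 x Hn) as [x' ->]. right; right. apply lt_0_succ.
  - intros y [H|[H|H]]; fold (succ y); unfold succ.
    + left. rewrite lt_succ_r. auto.
    + left. rewrite lt_succ_r. auto.
    + rewrite lt_def in H. destruct H as [z Hz]. destruct (classic (z = 0)) as [->|Hn].
      right; left. rewrite <- Hz; ring. destruct (Q3 z Hn) as [z' ->]. right; right. rewrite lt_def. exists z'.
      rewrite <- Hz. unfold succ; ring.
Qed.

Definition le (x y : D) := x < y \/ x = y.
Local Notation "x <= y" := (le x y).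

Lemma le_refl (x : D) : x <= x. Proof. right; auto. Qed.
Lemma le_def (x y : D) : x <= y <-> exists z, x + z = y.
Proof.
  unfold le. rewrite lt_def. split.
  - intros [[z Hz]| ->]. exists (z + 1). rewrite <- Hz; ring. exists 0; ring.
  - intros [z Hz]. destruct (classic (z = 0)) as [->|Hn]. right. rewrite <- Hz; ring.
    destruct (Q3 z Hn) as [z' ->]. left. exists z'. rewrite <- Hz; unfold succ; ring.
Qed.
Lemma lt_le_succ (x y : D) : x < y <-> x + 1 <= y.
Proof.
  rewrite lt_def, le_def. split; intros [z Hz]; exists z; rewrite <- Hz; ring.
Qed.
Lemma le_lt_succ (x y : D) : x <= y <-> x < y + 1.
Proof. rewrite lt_succ_r. reflexivity. Qed.
Lemma not_lt_le (x y : D) : ~ x < y <-> y <= x.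
Proof.
  unfold le. split. intros H. destruct (lt_total x y) as [H1|[H1|H1]]; auto. contradiction.
  intros [H1| ->] H2. apply (lt_irrefl x). eapply lt_trans; eauto. apply (lt_irrefl x); auto.
Qed.
Lemma not_le_lt (x y : D) : ~ x <= y <-> y < x.
Proof.
  rewrite <- not_lt_le. split. apply NNPP. tauto.
Qed.
Lemma le_trans (x y z : D) : x <= y -> y <= z -> x <= z.
Proof. rewrite !le_def. intros [a Ha] [b Hb]. exists (a + b). rewrite <- Hb, <- Ha; ring. Qed.
Lemma lt_le_trans (x y z : D) : x < y -> y <= z -> x < z.
Proof. intros H [H'| ->]; auto. eapply lt_trans; eauto. Qed.
Lemma le_lt_trans (x y z : D) : x <= y -> y < z -> x < z.
Proof. intros [H'| ->] H; auto. eapply lt_trans; eauto. Qed.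
Lemma le_0 (x : D) : 0 <= x.
Proof. rewrite le_def. exists x; ring. Qed.
Lemma le_add_r (x y : D) : x <= x + y.
Proof. rewrite le_def. exists y; ring. Qed.
Lemma le_add_l (x y : D) : x <= y + x.
Proof. rewrite le_def. exists y; ring. Qed.
Lemma lt_le (x y : D) : x < y -> x <= y. Proof. left; auto. Qed.
Lemma le_antisym (x y : D) : x <= y -> y <= x -> x = y.
Proof. intros [H| ->] H'; auto. rewrite <- not_lt_le in H'. contradiction. Qed.

Lemma add_lt_mono_r (x y z : D) : x < y <-> x + z < y + z.
Proof.
  rewrite !lt_def. split; intros [a Ha]; exists a.
  rewrite <- Ha; ring. apply (add_cancel_r _ _ z). rewrite <- Ha; ring.
Qed.
Lemma add_lt_mono_l (x y z : D) : x < y <-> z + x < z + y.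
Proof. rewrite !(add_comm z). apply add_lt_mono_r. Qed.
Lemma add_le_mono_r (x y z : D) : x <= y <-> x + z <= y + z.
Proof.
  rewrite !le_def. split; intros [a Ha]; exists a.
  rewrite <- Ha; ring. apply (add_cancel_r _ _ z). rewrite <- Ha; ring.
Qed.
Lemma add_le_mono_l (x y z : D) : x <= y <-> z + x <= z + y.
Proof. rewrite !(add_comm z). apply add_le_mono_r. Qed.
Lemma add_lt_l (x y z : D) : x < y -> z + x < z + y.
Proof. apply add_lt_mono_l. Qed.
Lemma add_lt_r (x y z : D) : x < y -> x + z < y + z.
Proof. apply add_lt_mono_r. Qed.
Lemma add_le_mono (a b c d : D) : a <= b -> c <= d -> a + c <= b + d.
Proof. intros H1 H2. apply le_trans with (b + c). apply add_le_mono_r; auto. apply add_le_mono_l; auto. Qed.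
Lemma add_lt_le_mono (a b c d : D) : a < b -> c <= d -> a + c < b + d.
Proof. intros H1 H2. apply lt_le_trans with (b + c). apply add_lt_mono_r; auto. apply add_le_mono_l; auto. Qed.

Lemma mul_le_mono_r (x y z : D) : x <= y -> x * z <= y * z.
Proof. rewrite !le_def. intros [a Ha]. exists (a * z). rewrite <- Ha; ring. Qed.
Lemma mul_le_mono_l (x y z : D) : x <= y -> z * x <= z * y.
Proof. rewrite !(mul_comm z). apply mul_le_mono_r. Qed.
Lemma mul_lt_mono_r (x y z : D) : 0 < z -> x < y -> x * z < y * z.
Proof.
  intros Hz. rewrite !lt_def. intros [a Ha]. rewrite lt_def in Hz. destruct Hz as [c Hc].
  exists (a * z + c). rewrite <- Ha, <- Hc. ring.
Qed.
Lemma mul_lt_mono_r_inv (x y z : D) : x * z < y * z -> x < y.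
Proof.
  intros H. apply not_le_lt. intros H'. apply (mul_le_mono_r _ _ z) in H'.
  rewrite <- not_lt_le in H'. contradiction.
Qed.
Lemma mul_le_mono_r_inv (x y z : D) : 0 < z -> x * z <= y * z -> x <= y.
Proof.
  intros Hz H. apply not_lt_le. intros H'. apply (mul_lt_mono_r _ _ z) in H'; auto.
  rewrite <- not_le_lt in H'. contradiction.
Qed.
Lemma mul_cancel_r (x y z : D) : 0 < z -> x * z = y * z -> x = y.
Proof.
  intros Hz H. apply le_antisym; apply (mul_le_mono_r_inv _ _ z Hz); right; auto.
Qed.
Lemma pos_ne0 (x : D) : 0 < x <-> x <> 0.
Proof.
  split. intros H ->. apply (lt_irrefl 0); auto.
  intros H. destruct (Q3 x H) as [y ->]. apply lt_0_succ.
Qed.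
Lemma le_mul_pos (x y : D) : 0 < y -> x <= x * y.
Proof.
  intros Hy. apply pos_ne0 in Hy. destruct (Q3 y Hy) as [y' ->]. unfold succ.
  rewrite le_def. exists (x * y'). ring.
Qed.
Lemma lt_1 (x : D) : x < 1 <-> x = 0.
Proof.
  replace 1 with (0 + 1) by ring. rewrite lt_succ_r. split. intros [H|H]; auto. destruct (not_lt_0 _ H).
  auto.
Qed.

Lemma divmod (d : D) : 0 < d -> forall s, exists q r, r < d /\ s = q * d + r.
Proof.
  intros Hd.
  assert (H : forall s, sat D (scons s (scons d z0))
    (fBEx (tplus (tvar 0) tone) (fBEx (tvar 2) (fEq (tvar 2) (tplus (ttimes (tvar 1) (tvar 3)) (tvar 0)))))).
  { apply ind. repeat constructor.
    - simpl. exists 0. split. apply lt_0_succ. exists 0. split; auto. ring.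
    - intros s. simpl. intros [q [Hq [r [Hr E]]]]. fold (succ s).
      assert (Hr1 : r + 1 <= d) by (apply lt_le_succ; auto).
      destruct Hr1 as [Hr1|Hr1].
      + exists q. split.
        * apply lt_trans with (s + 1); auto. apply lt_succ.
        * exists (r + 1). split; auto. rewrite E. unfold succ; ring.
      + exists (q + 1). split.
        * unfold succ. rewrite <- add_lt_mono_r. exact Hq.
        * exists 0. split.
          -- apply pos_ne0. intros Hd0. apply (not_lt_0 r). rewrite <- Hd0. auto.
          -- rewrite E. unfold succ. rewrite <- Hr1. ring. }
  intros s. specialize (H s). simpl in H. destruct H as [q [_ [r [Hr E]]]]. exists q, r; auto.
Qed.

Lemma divmod_uniq (d q r q' r' : D) : r < d -> r' < d -> q * d + r = q' * d + r' -> q = q' /\ r = r'.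
Proof.
  intros Hr Hr' E.
  assert (Hq : q = q').
  { destruct (lt_total q q') as [H|[H|H]]; auto; exfalso.
    - apply lt_le_succ in H. apply (mul_le_mono_r _ _ d) in H.
      assert (q * d + r < q' * d + r'). { apply lt_le_trans with (q * d + d). apply add_lt_mono_l; auto.
        eapply le_trans. 2: apply le_add_r. replace (q * d + d) with ((q + 1) * d) by ring. auto. }
      rewrite E in H0. apply (lt_irrefl _ H0).
    - apply lt_le_succ in H. apply (mul_le_mono_r _ _ d) in H.
      assert (q' * d + r' < q * d + r). { apply lt_le_trans with (q' * d + d). apply add_lt_mono_l; auto.
        eapply le_trans. 2: apply le_add_r. replace (q' * d + d) with ((q' + 1) * d) by ring. auto. }
      rewrite E in H0. apply (lt_irrefl _ H0). }
  subst. split; auto. apply add_cancel_l in E; auto.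
Qed.

End Arith.


Definition two : term := tplus tone tone.
Definition Esub (E : form) (a b c : term) : form :=
  subst (fun i => match i with 0 => c | 1 => b | 2 => a | _ => tzero end) E.

Lemma sat_Esub (D : structure) E a b c (e : nat -> D) :
  sat D e (Esub E a b c) <-> sat D (env3 (teval D e a) (teval D e b) (teval D e c)) E.
Proof.
  unfold Esub. rewrite sat_subst. apply sat_ext. intros [|[|[|i]]]; reflexivity.
Qed.

Definition bitF (E : form) (tt zt : term) : form :=
  fBEx (tplus tt tone) (fAnd (Esub E two (tren S zt) (tvar 0))
    (fBEx (tplus (tren S tt) tone) (fBEx (tvar 1)
      (fEq (tren S (tren S (tren S tt))) (tplus (tplus (ttimes (tvar 1) (ttimes (tvar 2) two)) (tvar 2)) (tvar 0)))))).

Lemma bitF_D0 E tt zt : Delta0 E -> Delta0 (bitF E tt zt).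
Proof. intros H. unfold bitF, Esub. repeat constructor. apply Delta0_subst; auto. Qed.

Lemma teval_shift' (D : structure) (e : nat -> D) x t : teval D (scons x e) (tsubst (fun i => tvar (S i)) t) = teval D e t.
Proof. apply (teval_shift D e x t). Qed.

Ltac d0 := repeat (first [apply Delta0_subst; assumption | unfold Esub; apply Delta0_subst; assumption | constructor]).

Section Exp.
Variable D : structure.
Hypothesis HD : model_IDelta0 D.
Variable E : form.
Hypothesis HE0 : Delta0 E.
Hypothesis HEf : forall x y z w : D, sat D (env3 x y z) E -> sat D (env3 x y w) E -> z = w.
Hypothesis HEz : forall x z : D, sat D (env3 x szero z) E <-> z = sone.
Hypothesis HEs : forall x y w : D, sat D (env3 x (succ y) w) E <-> exists z, sat D (env3 x y z) E /\ w = stimes z x.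
Hypothesis HEt : forall x y : D, exists z, sat D (env3 x y z) E.

Local Notation "x + y" := (splus x y).
Local Notation "x * y" := (stimes x y).
Local Notation "x < y" := (slt x y).
Local Notation "x <= y" := (le D x y).
Local Notation "0" := (@szero D).
Local Notation "1" := (@sone D).
Local Notation "2" := (splus (@sone D) (@sone D)).

Add Ring DRing : (SRth D HD).

Definition pow2 (y : D) : D := proj1_sig (constructive_indefinite_description _ (HEt 2 y)).
Lemma pow2_spec y : sat D (env3 2 y (pow2 y)) E.
Proof. unfold pow2. destruct (constructive_indefinite_description _ _); auto. Qed.
Lemma pow2_iff y z : sat D (env3 2 y z) E <-> z = pow2 y.
Proof. split. intros H. eapply HEf; eauto. apply pow2_spec. intros ->. apply pow2_spec. Qed.
Lemma pow2_0 : pow2 0 = 1.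
Proof. apply (proj1 (HEz 2 (pow2 0)) (pow2_spec 0)). Qed.
Lemma pow2_S y : pow2 (y + 1) = pow2 y * 2.
Proof. pose proof (pow2_spec (succ y)) as H. apply HEs in H as [z [Hz Hw]]. apply pow2_iff in Hz. unfold succ in Hw. rewrite Hw, Hz. reflexivity. Qed.

Lemma pow2_gt y : y < pow2 y.
Proof.
  assert (H : forall W y, sat D (scons y (scons W (fun _ => 0)))
     (fBAll (tplus (tvar 1) tone) (fImp (Esub E two (tvar 1) (tvar 0)) (fLt (tvar 1) (tvar 0))))).
  { intros W. apply ind; auto. d0.
    - simpl. intros v _ Hv. rewrite sat_Esub in Hv. simpl in Hv. apply HEz in Hv. subst. apply lt_1; auto.
    - intros y0 IH. simpl in *. intros v Hv Hv'. rewrite sat_Esub in Hv'. simpl in Hv'.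
      apply HEs in Hv' as [z [Hz ->]]. assert (Hzv : z <= z * 2).
      { apply le_mul_pos; auto. apply lt_0_succ; auto. }
      specialize (IH z (le_lt_trans D HD _ _ _ Hzv Hv)). rewrite sat_Esub in IH. specialize (IH Hz).
      unfold succ. apply lt_le_succ in IH; auto.
      apply le_lt_trans with z; auto. replace (z * 2) with (z + z) by ring.
      apply lt_add_pos; auto. apply lt_le_trans with (y0 + 1); auto. apply lt_0_succ; auto. }
  specialize (H (pow2 y) y). simpl in H. specialize (H (pow2 y) (lt_succ D HD _)). rewrite sat_Esub in H. apply H. apply pow2_spec.
Qed.

Lemma pow2_pos y : 0 < pow2 y.
Proof. apply le_lt_trans with y; auto. apply le_0; auto. apply pow2_gt. Qed.

Lemma pow2_add i j : pow2 (i + j) = pow2 i * pow2 j.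
Proof.
  assert (H : forall W, forall j, sat D (scons j (scons (pow2 i) (scons i (scons W (fun _ => 0)))))
     (fBAll (tplus (tvar 3) tone) (fImp (Esub E two (tvar 1) (tvar 0)) (Esub E two (tplus (tvar 3) (tvar 1)) (ttimes (tvar 2) (tvar 0)))))).
  { intros W. apply ind; auto. d0.
    - simpl. intros v _ Hv. rewrite sat_Esub in *. simpl in *. apply HEz in Hv. subst.
      rewrite Q4 by auto. replace (pow2 i * 1) with (pow2 i) by ring. apply pow2_spec.
    - intros y IH. simpl in *. intros v Hv Hv'. rewrite sat_Esub in *. simpl in *.
      apply HEs in Hv' as [z [Hz ->]]. assert (Hzv : z <= z * 2).
      { apply le_mul_pos; auto. apply lt_0_succ; auto. }
      specialize (IH z (le_lt_trans D HD _ _ _ Hzv Hv)). rewrite sat_Esub in IH. specialize (IH Hz).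
      rewrite Q5 by auto. apply HEs. exists (pow2 i * z). split. rewrite sat_Esub in IH. exact IH. ring. }
  specialize (H (pow2 j) j). simpl in H. specialize (H (pow2 j) (lt_succ D HD _)). rewrite !sat_Esub in H.
  simpl in H. symmetry. apply (proj1 (pow2_iff _ _)). apply H. apply pow2_spec.
Qed.

(** Bits *)
Definition bitS (t z : D) : Prop := exists q r, r < pow2 z /\ t = q * (pow2 z * 2) + pow2 z + r.

Lemma two_pos (P : D) : 0 < P -> 0 < P * 2.
Proof. intros H. replace (P * 2) with (P + P) by ring. apply lt_le_trans with P; auto. apply le_add_r; auto. Qed.

Lemma sat_bitF tt zt (e : nat -> D) : sat D e (bitF E tt zt) <-> bitS (teval D e tt) (teval D e zt).
Proof.
  unfold bitF. simpl. repeat setoid_rewrite teval_shift. split.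
  - intros [p [_ [Hp [q [_ [r [Hr Eq]]]]]]]. rewrite sat_Esub in Hp. simpl in Hp. rewrite ?teval_shift, ?teval_shift' in Hp.
    apply pow2_iff in Hp. subst. exists q, r. split; auto; rewrite Eq; ring.
  - intros [q [r [Hr Eq]]]. set (P := pow2 (teval D e zt)) in *. set (t := teval D e tt) in *.
    assert (HP : 0 < P) by apply pow2_pos.
    assert (H2P : 0 < P * 2) by (apply two_pos; auto).
    assert (HPt : P <= t).
    { rewrite Eq. apply le_trans with (q * (P * 2) + P); auto. apply le_add_l; auto. apply le_add_r; auto. }
    assert (Hqt : q <= t).
    { rewrite Eq. apply le_trans with (q * (P * 2)); auto. apply le_mul_pos; auto.
      apply le_trans with (q * (P * 2) + P); auto; apply le_add_r; auto. }
    exists P. split. apply le_lt_succ; auto. split.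
    + rewrite sat_Esub. simpl. rewrite ?teval_shift, ?teval_shift'. apply pow2_spec.
    + exists q. split. apply le_lt_succ; auto. exists r. split; auto; rewrite Eq; ring.
Qed.



Lemma bit_dec t z : bitS t z \/ exists q r, r < pow2 z /\ t = q * (pow2 z * 2) + r.
Proof.
  destruct (divmod D HD (pow2 z * 2) (two_pos _ (pow2_pos z)) t) as [q [R [HR Et]]].
  destruct (classic (R < pow2 z)) as [H|H]. right; eauto.
  apply not_lt_le in H; auto. apply le_def in H; auto. destruct H as [r Hr]. left. exists q, r. split.
  - apply (add_lt_mono_l D HD _ _ (pow2 z)). rewrite Hr. replace (pow2 z + pow2 z) with (pow2 z * 2) by ring. auto.
  - rewrite Et, <- Hr. ring.
Qed.

Lemma bit_uniq t z q r : bitS t z -> r < pow2 z -> t = q * (pow2 z * 2) + r -> False.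
Proof.
  intros [q' [r' [Hr' E']]] Hr Et. rewrite Et in E'. rewrite <- add_assoc in E' by auto.
  apply divmod_uniq in E'; auto.
  - destruct E' as [_ E']. subst r. apply (lt_irrefl D HD (pow2 z)). eapply le_lt_trans; eauto. apply le_add_r; auto.
  - apply lt_trans with (pow2 z); auto. replace (pow2 z * 2) with (pow2 z + pow2 z) by ring.
    rewrite <- (Q4 D HD (pow2 z)) at 1. apply add_lt_l; auto. apply pow2_pos.
  - replace (pow2 z * 2) with (pow2 z + pow2 z) by ring. apply add_lt_l; auto.
Qed.

Lemma not_bit t z : ~ bitS t z -> exists q r, r < pow2 z /\ t = q * (pow2 z * 2) + r.
Proof. intros H. destruct (bit_dec t z); tauto. Qed.

Lemma bit_0 z : ~ bitS 0 z.
Proof. intros H. apply (bit_uniq 0 z 0 0 H). apply pow2_pos. ring. Qed.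

Lemma bit_lt t z : bitS t z -> z < t.
Proof.
  intros [q [r [Hr Et]]]. apply lt_le_trans with (pow2 z); auto. apply pow2_gt. rewrite Et.
  eapply le_trans; auto. 2: apply le_add_r; auto. apply le_add_l; auto.
Qed.

Lemma pow2_split z0 z : z0 < z -> exists T, pow2 z = pow2 z0 * 2 * T /\ 0 < T.
Proof.
  intros H. apply lt_def in H; auto. destruct H as [d Hd]. subst z. rewrite pow2_S, pow2_add.
  exists (pow2 d). split. ring. apply pow2_pos.
Qed.

Lemma lt_mul_bound (Q T B : D) : 0 < B -> Q * B < T * B -> Q + 1 <= T.
Proof. intros HB H. apply lt_le_succ; auto. eapply mul_lt_mono_r_inv; eauto. Qed.

Ltac rg := repeat match goal with X := _ |- _ => subst X end; ring.

Lemma bit_insert t z0 z : ~ bitS t z0 -> (bitS (t + pow2 z0) z <-> bitS t z \/ z = z0).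
Proof.
  intros Hn. pose proof (not_bit _ _ Hn) as [Q [R [HR Et]]].
  set (P0 := pow2 z0) in *.
  destruct (lt_total D HD z z0) as [Hlt|[Heq|Hgt]].
  - destruct (pow2_split _ _ Hlt) as [T [HT HTp]]. fold P0 in HT. split.
    + intros Hb. left. destruct (bit_dec t z) as [?|[q' [r' [Hr' Et']]]]; auto. exfalso.
      apply (bit_uniq _ _ (q' + T) r' Hb Hr'). rewrite Et', HT. rg.
    + intros [[q [r [Hr Et']]]| ->]. exists (q + T), r. split; auto. rewrite Et', HT. rg.
      destruct (lt_irrefl D HD _ Hlt).
  - subst z. split; auto. intros _. exists Q, R. split; auto. rewrite Et. rg.
  - destruct (pow2_split _ _ Hgt) as [T [HT HTp]]. fold P0 in HT. split.
    + intros [q [r [Hr Et']]]. left. destruct (classic (P0 <= r)) as [Hle|Hle].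
      * apply le_def in Hle; auto. destruct Hle as [r' Hr']. subst r. exists q, r'. split.
        eapply le_lt_trans; eauto. apply le_add_l; auto.
        apply (add_cancel_r D HD _ _ P0). rewrite Et'. rg.
      * apply not_le_lt in Hle; auto. exfalso. apply Hn. apply pos_ne0 in HTp; auto.
        destruct (Q3 D HD T HTp) as [T' ->]. unfold succ in HT.
        exists (q * (2 * (T' + 1)) + T'), r. split; auto.
        apply (add_cancel_r D HD _ _ P0). rewrite Et', HT. rg.
    + intros [[q [r [Hr Et']]]| ->].
      * assert (H2P0 : 0 < P0 * 2) by (apply two_pos; apply pow2_pos).
        destruct (divmod D HD (P0 * 2) H2P0 r) as [q1 [r1 [Hr1 Er]]].
        assert (Hr1R : r1 = R).
        { assert (Hx : t = (q * (2 * T) + T + q1) * (P0 * 2) + r1) by (rewrite Et', Er, HT; ring).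
          rewrite Et in Hx. apply divmod_uniq in Hx; auto. destruct Hx; auto.
          apply lt_trans with P0; auto. replace (P0 * 2) with (P0 + P0) by rg.
          rewrite <- (Q4 D HD P0) at 1. apply add_lt_l; auto. apply pow2_pos. }
        subst r1.
        assert (Hq1 : q1 + 1 <= T).
        { apply (lt_mul_bound q1 T (P0 * 2) H2P0). apply (le_lt_trans D HD _ r). rewrite Er. apply le_add_r; auto.
          rewrite HT in Hr. replace (T * (P0 * 2)) with (P0 * 2 * T) by rg. auto. }
        exists q, (r + P0). split.
        -- apply (lt_le_trans D HD _ ((q1 + 1) * (P0 * 2))).
           rewrite Er. replace ((q1 + 1) * (P0 * 2)) with (q1 * (P0 * 2) + (P0 + P0)) by rg.
           rewrite <- add_assoc by auto. apply add_lt_l; auto. apply add_lt_r; auto.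
           rewrite HT. replace (P0 * 2 * T) with (T * (P0 * 2)) by rg. apply mul_le_mono_r; auto.
        -- rewrite Et'. rg.
      * destruct (lt_irrefl D HD _ Hgt).
Qed.

Lemma bit_insert_bound t z0 a : t < pow2 a -> z0 < a -> ~ bitS t z0 -> t + pow2 z0 < pow2 a.
Proof.
  intros Ht Hz Hn. pose proof (not_bit _ _ Hn) as [Q [R [HR Et]]]. set (P0 := pow2 z0) in *.
  destruct (pow2_split _ _ Hz) as [T [HT HTp]]. fold P0 in HT.
  assert (H2P0 : 0 < P0 * 2) by (apply two_pos; apply pow2_pos).
  assert (HQ : Q + 1 <= T).
  { apply (lt_mul_bound Q T (P0 * 2) H2P0). apply (le_lt_trans D HD _ t). rewrite Et. apply le_add_r; auto.
    rewrite HT in Ht. replace (T * (P0 * 2)) with (P0 * 2 * T) by rg. auto. }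
  rewrite HT. apply (lt_le_trans D HD _ ((Q + 1) * (P0 * 2))).
  - rewrite Et. replace ((Q + 1) * (P0 * 2)) with (Q * (P0 * 2) + (P0 + P0)) by rg.
    rewrite <- add_assoc by auto. apply add_lt_l; auto. apply add_lt_r; auto.
  - replace (P0 * 2 * T) with (T * (P0 * 2)) by rg. apply mul_le_mono_r; auto.
Qed.

End Exp.


Definition prT (a b : term) : term := tplus (ttimes (tplus a b) (tplus a b)) a.
Fixpoint codeT (l : list term) : term :=
  match l with [] => tzero | a :: l => prT a (codeT l) end.

Definition pr {D : structure} (x y : D) : D := splus (stimes (splus x y) (splus x y)) x.
Fixpoint codeL {D : structure} (l : list D) : D :=
  match l with [] => szero | a :: l => pr a (codeL l) end.

Lemma teval_codeT (D : structure) e l : teval D e (codeT l) = codeL (map (teval D e) l).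
Proof. induction l; simpl; auto. rewrite IHl. reflexivity. Qed.

Section Pair.
Variable D : structure.
Hypothesis HD : model_IDelta0 D.
Local Notation "x + y" := (splus x y).
Local Notation "x * y" := (stimes x y).
Local Notation "x < y" := (slt x y).
Local Notation "x <= y" := (le D x y).
Local Notation "0" := (@szero D).
Local Notation "1" := (@sone D).
Add Ring DRing : (SRth D HD).

Lemma sq_le (a b : D) : a <= b -> a * a <= b * b.
Proof. intros H. apply (le_trans D HD _ (a * b)). apply mul_le_mono_l; auto. apply mul_le_mono_r; auto. Qed.

Lemma pr_inj (x y x' y' : D) : pr x y = pr x' y' -> x = x' /\ y = y'.
Proof.
  unfold pr. intros E.
  assert (Hn : forall x y x' y' : D, (x + y) * (x + y) + x = (x' + y') * (x' + y') + x' -> ~ (x + y < x' + y')).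
  { clear E x y x' y'. intros x y x' y' E H. apply lt_le_succ in H; auto. apply sq_le in H.
    assert (H1 : (x + y) * (x + y) + x < (x + y + 1) * (x + y + 1)).
    { replace ((x + y + 1) * (x + y + 1)) with ((x + y) * (x + y) + (x + (1 + (y + (x + y))))) by ring.
      apply add_lt_l; auto. rewrite add_assoc by auto. apply (lt_le_trans D HD _ (x + 1)).
      apply lt_succ; auto. apply le_add_r; auto. }
    rewrite E in H1. apply (lt_irrefl D HD ((x' + y') * (x' + y') + x')).
    apply (lt_le_trans D HD _ ((x + y + 1) * (x + y + 1))); auto.
    apply (le_trans D HD _ ((x' + y') * (x' + y'))); auto. apply le_add_r; auto. }
  assert (Hs : x + y = x' + y').
  { destruct (lt_total D HD (x + y) (x' + y')) as [H|[H|H]]; auto.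
    exfalso. apply (Hn x y x' y' E H). exfalso. apply (Hn x' y' x y (eq_sym E) H). }
  rewrite Hs in E. apply add_cancel_l in E; auto. subst. split; auto.
  apply add_cancel_l in Hs; auto.
Qed.

Lemma pr_ge_l (x y : D) : x <= pr x y.
Proof. unfold pr. apply le_add_l; auto. Qed.

Lemma pr_ge_r (x y : D) : y <= pr x y.
Proof.
  unfold pr. destruct (classic (x + y = 0)) as [H|H].
  - apply add_eq_0 in H; auto. destruct H as [_ ->]. apply le_0; auto.
  - apply (le_trans D HD _ (x + y)). apply le_add_l; auto.
    apply (le_trans D HD _ ((x + y) * (x + y))). apply le_mul_pos; auto. apply pos_ne0; auto.
    apply le_add_r; auto.
Qed.

Lemma codeL_inj (l l' : list D) : length l = length l' -> codeL l = codeL l' -> l = l'.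
Proof.
  revert l'; induction l; intros [|b l'] Hl E; simpl in *; try discriminate; auto.
  apply pr_inj in E; auto. destruct E as [-> E]. f_equal. apply IHl; auto.
Qed.

Lemma codeL_ge (l : list D) v : In v l -> v <= codeL l.
Proof.
  induction l; simpl; intros H. contradiction. destruct H as [->|H]. apply pr_ge_l.
  apply (le_trans D HD _ (codeL l)); auto. apply pr_ge_r.
Qed.

End Pair.


Lemma exists_snoc {A : Type} (l : list A) n : length l = S n -> exists l' x, l = l' ++ [x] /\ length l' = n.
Proof.
  intros H. destruct (exists_last (l:=l)) as [l' [x Hx]]. destruct l; simpl in H; [lia|discriminate].
  exists l', x. split; auto. subst. rewrite length_app in H. simpl in H. lia.
Qed.

Lemma D0_bexs m : forall tb (P : Pred), D0Def P ->
  D0Def (fun D env => exists l, length l = m /\ Forall (fun v => slt v (teval D env tb)) l /\ P D (app_env l env)).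
Proof.
  induction m; intros tb P HP.
  - eapply D0Def_ext. apply HP. intros D env. split.
    + intros H. exists []. simpl. auto.
    + intros [l [Hl [_ H]]]. destruct l; simpl in *; auto; lia.
  - eapply D0Def_ext. apply (D0_bex tb). apply (IHm (tren S tb) P HP). intros D env. simpl.
    split.
    + intros [x [Hx [l [Hl [Hf H]]]]]. rewrite teval_shift in Hf. exists (l ++ [x]). rewrite length_app. simpl. split. lia.
      split. apply Forall_app; auto. rewrite <- app_env_snoc. auto.
    + intros [l [Hl [Hf H]]]. destruct (exists_snoc l m Hl) as [l' [x [-> Hl']]].
      apply Forall_app in Hf as [Hf1 Hf2]. inversion Hf2; subst. exists x. split; auto.
      exists l'. split; auto. split. rewrite teval_shift; auto. rewrite app_env_snoc; auto.
Qed.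

Lemma PDef_balls k m : forall tb (P : Pred), PDef k P ->
  PDef k (fun D env => forall l, length l = m -> Forall (fun v => slt v (teval D env tb)) l -> P D (app_env l env)).
Proof.
  induction m; intros tb P HP.
  - eapply PDef_ext. apply HP. intros D env. split.
    + intros H l Hl _. destruct l; simpl in *; auto; lia.
    + intros H. apply (H []); auto.
  - eapply PDef_ext. apply (PDef_ball k tb). apply (IHm (tren S tb) P HP). intros D env. simpl.
    split.
    + intros H l Hl Hf. destruct (exists_snoc l m Hl) as [l' [x [-> Hl']]].
      apply Forall_app in Hf as [Hf1 Hf2]. inversion Hf2; subst. rewrite <- app_env_snoc. apply H; auto.
      rewrite teval_shift; auto.
    + intros H x Hx l Hl Hf. rewrite teval_shift in Hf. rewrite app_env_snoc. apply H. rewrite length_app; simpl; lia.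
      apply Forall_app; auto.
Qed.

Definition cT (m : nat) : term := codeT (tvar m :: map tvar (seq 0 m)).

Lemma map_app_env_seq {D : Type} (l : list D) E : map (fun i => app_env l E i) (seq 0 (length l)) = l.
Proof.
  induction l; simpl; auto. f_equal. rewrite <- seq_shift, map_map. simpl. auto.
Qed.

Lemma teval_cT (D : structure) (l : list D) y env :
  teval D (app_env l (scons y env)) (cT (length l)) = codeL (y :: l).
Proof.
  unfold cT. rewrite teval_codeT. simpl. f_equal.
  - apply (app_env_plus l (scons y env) 0).
  - f_equal. rewrite map_map. simpl. apply map_app_env_seq.
Qed.


Section Preds.
Variable E : form.
Hypothesis HE0 : Delta0 E.
Variable m : nat.
Variable n : nat.
Variable p nq1 : form.
Hypothesis Hp : Sigma (S n) p.
Hypothesis Hnq1 : Pi n nq1.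

Definition bitD (D : structure) (u z : D) : Prop :=
  sat D (scons z (scons u (fun _ => szero))) (bitF E (tvar 1) (tvar 0)).

Lemma bit_def tu tz : D0Def (fun D env => bitD D (teval D env tu) (teval D env tz)).
Proof.
  exists (subst (fun i => match i with 0 => tz | 1 => tu | _ => tzero end) (bitF E (tvar 1) (tvar 0))).
  split. apply Delta0_subst. apply bitF_D0; auto.
  intros D env. rewrite sat_subst. unfold bitD. apply sat_ext. intros [|[|i]]; reflexivity.
Qed.

Definition Bsem (D : structure) (t s a : D) : Prop :=
  forall y, slt y a -> bitD D s y ->
    exists l, length l = m /\ Forall (fun v => slt v t) l /\ bitD D t (codeL (y :: l)).

Definition Csem (D : structure) (t a x : D) (e : nat -> D) : Prop :=
  forall y, slt y a -> forall l, length l = m -> Forall (fun v => slt v t) l ->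
    bitD D t (codeL (y :: l)) -> sat D (app_env l (scons y (scons x e))) nq1.

Definition Asem (D : structure) (s a x : D) (e : nat -> D) : Prop :=
  forall y, slt y a -> ~ bitD D s y -> ~ sat D (scons y (scons x e)) p.

Lemma Bdef it is ia : D0Def (fun D env => Bsem D (env it) (env is) (env ia)).
Proof.
  eapply D0Def_ext.
  apply (D0_ball (tvar ia)). apply D0_imp. apply (bit_def (tvar (S is)) (tvar 0)).
  apply (D0_bexs m (tvar (S it))). apply (bit_def (tvar (S it + m)) (cT m)).
  intros D env. unfold Bsem. cbn [teval scons]. split.
  - intros H y Hy Hb. destruct (H y Hy Hb) as [l [Hl [Hf Hb']]]. exists l. split; auto. split; auto.
    rewrite <- Hl in Hb'. rewrite app_env_plus, teval_cT in Hb'. exact Hb'.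
  - intros H y Hy Hb. destruct (H y Hy Hb) as [l [Hl [Hf Hb']]]. exists l. split; auto. split; auto.
    rewrite <- Hl. rewrite app_env_plus, teval_cT. exact Hb'.
Qed.

Definition sC (ix be : nat) : nat -> term :=
  fun i => if i <=? m then tvar i else if i =? S m then tvar (S m + ix) else tvar (i - 1 + be).

Lemma app_env_ge {T : Type} (l : list T) F i : length l <= i -> app_env l F i = F (i - length l).
Proof. intros H. replace i with ((i - length l) + length l) at 1 by lia. apply app_env_plus. Qed.

Lemma sC_env (D : structure) (l : list D) y env ix be : length l = m ->
  (fun i => teval D (app_env l (scons y env)) (sC ix be i)) =
  app_env l (scons y (scons (env ix) (fun i => env (be + i)))).
Proof.
  intros Hl. apply functional_extensionality. intros i. unfold sC.
  destruct (Nat.leb_spec i m).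
  - simpl. destruct (Nat.lt_ge_cases i m).
    + apply app_env_lt; lia.
    + rewrite !app_env_ge by lia. replace (i - length l) with 0 by lia. reflexivity.
  - destruct (Nat.eqb_spec i (S m)).
    + subst i. cbn [teval]. rewrite !app_env_ge by lia. rewrite Hl.
      assert (E1 : S m + ix - m = S ix) by lia. assert (E2 : S m - m = 1) by lia.
      rewrite E1, E2. reflexivity.
    + cbn [teval]. rewrite !app_env_ge by lia. rewrite Hl.
      assert (E1 : i - 1 + be - m = S (be + (i - m - 2))) by lia. assert (E2 : i - m = S (S (i - m - 2))) by lia.
      remember (i - m - 2) as j.
      cbn [teval]. rewrite E1, E2. reflexivity.
Qed.

Lemma Cdef it ia ix be : PDef n (fun D env => Csem D (env it) (env ia) (env ix) (fun i => env (be + i))).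
Proof.
  eapply PDef_ext.
  apply (PDef_ball n (tvar ia)). apply (PDef_balls n m (tvar (S it))). apply PDef_imp.
  apply D0_SDef. apply (bit_def (tvar (S it + m)) (cT m)).
  apply (PDef_form n nq1 (sC ix be) Hnq1).
  intros D env. unfold Csem. cbn [teval scons]. split.
  - intros H y Hy l Hl Hf Hb. specialize (H y Hy l Hl Hf). rewrite <- Hl in H. rewrite app_env_plus, teval_cT in H.
    specialize (H Hb). rewrite sC_env in H; auto.
  - intros H y Hy l Hl Hf Hb. rewrite sC_env; auto. rewrite <- Hl in Hb. rewrite app_env_plus, teval_cT in Hb.
    apply H; auto.
Qed.

Definition sA (ix be : nat) : nat -> term :=
  fun i => match i with 0 => tvar 0 | 1 => tvar (S ix) | S (S j) => tvar (S (be + j)) end.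

Lemma Adef is ia ix be : PDef (S n) (fun D env => Asem D (env is) (env ia) (env ix) (fun i => env (be + i))).
Proof.
  eapply PDef_ext.
  apply (PDef_ball (S n) (tvar ia)). apply PDef_imp. apply D0_SDef. apply D0_not. apply (bit_def (tvar (S is)) (tvar 0)).
  apply PDef_not. apply (SDef_form (S n) p (sA ix be) Hp).
  intros D env. unfold Asem. cbn [teval scons].
  assert (Henv : forall y, (fun i => teval D (scons y env) (sA ix be i)) = scons y (scons (env ix) (fun i => env (be + i)))).
  { intros y. apply functional_extensionality. intros [|[|i]]; reflexivity. }
  setoid_rewrite Henv. tauto.
Qed.

End Preds.


Section Main.
Variables M K : structure.
Variable f : embedding M K.
Variable n : nat.
Hypothesis HM : model_IDelta0_exp M.
Hypothesis HK : model_IDelta0_exp K.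
Hypothesis Hend : end_extension f.
Hypothesis Hprop : proper_extension f.
Hypothesis Helem : Sigma_elementary (S (S n)) f.
Hypothesis HMI : M_ISigma (S n) f.

Lemma transfer (P : Pred) : SDef (S (S n)) P -> forall e, P M e <-> P K (fun i => f (e i)).
Proof.
  intros [r [Hr HP]] e. rewrite <- !HP. apply Helem; auto.
Qed.

Lemma HK0 : model_IDelta0 K. Proof. apply HK. Qed.
Lemma HM0 : model_IDelta0 M. Proof. apply HM. Qed.

Lemma in_img (y : K) (a : M) : slt y (f a) -> exists y0, f y0 = y /\ slt y0 a.
Proof.
  intros H. destruct (classic (in_image f y)) as [[y0 Hy0]|Hn].
  - exists y0. split; auto. apply (emb_lt _ _ f). rewrite Hy0; auto.
  - exfalso. specialize (Hend y Hn a). apply (lt_irrefl K HK0 y). eapply lt_trans; eauto. apply HK0.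
Qed.

Lemma main_WR p q : Sigma (S n) p -> Pi (S n) q -> WR_holds M (fAnd p q).
Proof.
  intros Hp Hq e a Hall. apply NNPP. intros Hno.
  assert (Hneg : forall y, slt y a -> exists b, forall x, slt b x ->
            ~ (sat M (scons y (scons x e)) p /\ sat M (scons y (scons x e)) q)).
  { intros y Hy. apply NNPP. intros H1. apply Hno. exists y. split; auto. intros b. apply NNPP. intros H2.
    apply H1. exists b. intros x Hx Hpq. apply H2. exists x. split; auto. }
  destruct Hprop as [k Hk]. pose proof (Hend k Hk) as Hkbig.
  set (fe := fun i => f (e i)).
  assert (HH : forall y0, slt y0 a -> ~ (sat K (scons (f y0) (scons k fe)) p /\ sat K (scons (f y0) (scons k fe)) q)).
  { intros y0 Hy0 [HpK HqK]. destruct (Hneg y0 Hy0) as [b Hb].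
    set (sF := fun i => match i with 0 => tvar 2 | 1 => tvar 0 | S (S j) => tvar (3 + j) end).
    set (FP := fun (D : structure) (env : nat -> D) => exists x, slt (env 0) x /\
             sat D (scons (env 1) (scons x (fun i => env (2 + i)))) p /\ sat D (scons (env 1) (scons x (fun i => env (2 + i)))) q).
    assert (HF : SDef (S (S n)) FP).
    { eapply SDef_ext. apply SDef_ex. apply SDef_and. apply D0_SDef. apply (D0_lt (tvar 1) (tvar 0)).
      apply SDef_and. apply (SDef_S (S n)). apply (SDef_form (S n) p sF Hp).
      apply PDef_SDef_S. apply (PDef_form (S n) q sF Hq).
      intros D env. unfold FP. simpl.
      assert (Henv : forall x, (fun i => teval D (scons x env) (sF i)) = scons (env 1) (scons x (fun i => env (2 + i)))).
      { intros x. apply functional_extensionality. intros [|[|i]]; reflexivity. }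
      setoid_rewrite Henv. tauto. }
    pose proof (transfer FP HF (scons b (scons y0 e))) as HT.
    assert (HKs : FP K (fun i => f (scons b (scons y0 e) i))).
    { exists k. simpl. split. apply Hkbig. split; auto. }
    apply HT in HKs. destruct HKs as [x [Hx [H1 H2]]]. simpl in H1, H2. apply (Hb x Hx). split; auto. }
  destruct HK as [_ [EK [HE0 [HEf [HEz [HEs HEt]]]]]].
  set (P2 := pow2 K EK HEt).
  assert (HBd : exists z0, f z0 = P2 (f a)).
  { set (QP := fun (D : structure) (env : nat -> D) => exists z, sat D (env3 (splus sone sone) (env 0) z) EK).
    assert (HQ : SDef (S (S n)) QP).
    { eapply SDef_ext. apply SDef_ex. apply D0_SDef. apply (D0_form (Esub EK two (tvar 1) (tvar 0)) (fun i => tvar i)).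
      unfold Esub. apply Delta0_subst; auto.
      intros D env. unfold QP. simpl. setoid_rewrite sat_Esub. tauto. }
    assert (HQK : QP K (fun i => f (scons a e i))).
    { exists (P2 (f a)). apply pow2_spec. }
    apply (transfer QP HQ) in HQK. destruct HQK as [z0 Hz0]. exists z0.
    set (RP := fun (D : structure) (env : nat -> D) => sat D (env3 (splus sone sone) (env 1) (env 0)) EK).
    assert (HR : SDef (S (S n)) RP).
    { eapply SDef_ext. apply D0_SDef. apply (D0_form (Esub EK two (tvar 1) (tvar 0)) (fun i => tvar i)).
      unfold Esub. apply Delta0_subst; auto.
      intros D env. unfold RP. simpl. rewrite sat_Esub. tauto. }
    assert (HRM : RP M (scons z0 (scons a e))) by exact Hz0.
    apply (transfer RP HR) in HRM. unfold RP in HRM. simpl in HRM.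
    apply (proj1 (pow2_iff K EK HEf HEt _ _)). exact HRM. }
  destruct HBd as [z0 Hz0].
  destruct (Pi_nf n q Hq) as [m [q1 [Eq Hq1]]]. subst q.
  destruct (Sigma_neg n q1 Hq1) as [nq1 [Hnq1 Hnq1s]].
  assert (bitD_iff : forall u z, bitD EK K u z <-> bitS K EK HEt u z).
  { intros u z. unfold bitD. rewrite (sat_bitF K HK0 EK HE0 HEf HEz HEs HEt). simpl. tauto. }
  set (bS := bitS K EK HEt) in *.
  set (eK0 := scons k (scons (f z0) (scons (f a) fe))).
  set (TP := fun (D : structure) (env : nat -> D) => exists s t, le D (env 0) s /\ slt s (env 2) /\
      Bsem EK m D t s (env 3) /\ Csem EK m nq1 D t (env 3) (env 1) (fun i => env (4 + i))).
  assert (HTP : SDef (S n) TP).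
  { eapply SDef_ext. apply SDef_ex. apply SDef_ex.
    apply SDef_and. apply D0_SDef. apply D0_or. apply (D0_lt (tvar 2) (tvar 1)). apply (D0_eq (tvar 2) (tvar 1)).
    apply SDef_and. apply D0_SDef. apply (D0_lt (tvar 1) (tvar 4)).
    apply SDef_and. apply D0_SDef. apply (Bdef EK HE0 m 0 1 5).
    apply PDef_SDef_S. apply (Cdef EK HE0 m n nq1 Hnq1 0 5 3 6).
    intros D env. unfold TP. simpl. unfold le. tauto. }
  destruct HTP as [rT [HrT HrTs]].
  assert (Hfz : f (splus z0 sone) = splus (P2 (f a)) sone).
  { rewrite emb_plus, emb_one, Hz0. reflexivity. }
  assert (Hstep : exists c, TP K (scons c eK0) /\ ~ TP K (scons (succ c) eK0)).
  { apply NNPP. intros Hc.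
    assert (Hall' : forall x, slt x (f (splus z0 sone)) -> sat K (scons x eK0) rT).
    { apply (HMI rT HrT eK0 (splus z0 sone)).
      - apply HrTs. exists szero, szero. simpl. split. right; auto. split. rewrite Hz0. apply pow2_pos; auto. apply HK0.
        split.
        + intros y _ Hb. apply bitD_iff in Hb. exfalso. apply (bit_0 K HK0 EK HE0 HEz HEs HEt y Hb).
        + intros y _ l _ _ Hb. apply bitD_iff in Hb. exfalso. apply (bit_0 K HK0 EK HE0 HEz HEs HEt _ Hb).
      - intros x _ Hx. apply HrTs. apply HrTs in Hx. apply NNPP. intros Hx'. apply Hc. exists x. split; auto. }
    specialize (Hall' (f z0)). rewrite Hfz, <- Hz0 in Hall'. specialize (Hall' (lt_succ K HK0 _)).
    apply HrTs in Hall'. destruct Hall' as [s [t [Hle [Hlt _]]]]. simpl in Hle, Hlt.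
    apply (lt_irrefl K HK0 s). exact (lt_le_trans K HK0 _ _ _ Hlt Hle). }
  destruct Hstep as [c [[s [t [Hcs [Hs [HB HC]]]]] Hnext]].
  unfold eK0 in Hcs, Hs, HB, HC. simpl in Hcs, Hs, HB, HC.
  assert (HA' : forall y, slt y (f a) -> ~ bS s y -> sat K (scons y (scons k fe)) (alls m q1)).
  { intros y Hy Hnb. apply NNPP. intros Hnq. rewrite sat_alls in Hnq.
    apply not_all_ex_not in Hnq as [l Hl]. apply imply_to_and in Hl as [Hlm Hnl].
    set (z1 := codeL (y :: l)).
    assert (Ht' : exists t', bS t' z1 /\ (forall z, bS t' z -> bS t z \/ z = z1) /\
                             (forall z, bS t z -> bS t' z) /\ le K t t').
    { destruct (classic (bS t z1)) as [Hb|Hb].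
      - exists t. split; auto. split; auto. split; auto. right; auto.
      - exists (splus t (P2 z1)). pose proof (bit_insert K HK0 EK HE0 HEf HEz HEs HEt t z1) as BI.
        split. apply (BI z1 Hb). right; auto. split. intros z Hz. apply (BI z Hb); auto.
        split. intros z Hz. apply (BI z Hb). left; auto. apply le_add_r; apply HK0. }
    destruct Ht' as [t' [Ht1 [Ht2 [Ht3 Ht4]]]].
    apply Hnext. exists (splus s (P2 y)), t'. unfold eK0. simpl. split; [|split; [|split]].
    - apply (proj1 (lt_le_succ K HK0 c _)). apply (le_lt_trans K HK0 _ s); auto.
      apply lt_add_pos; [apply HK0|]. apply pow2_pos; auto; apply HK0.
    - rewrite Hz0. apply (bit_insert_bound K HK0 EK HE0 HEf HEz HEs HEt s y (f a)); auto. fold P2. rewrite <- Hz0; auto.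
    - intros y' Hy' Hb'. apply bitD_iff in Hb'.
      pose proof (bit_insert K HK0 EK HE0 HEf HEz HEs HEt s y y' Hnb) as BIs.
      destruct (proj1 BIs Hb') as [Hb''| ->].
      + destruct (HB y' Hy' (proj2 (bitD_iff _ _) Hb'')) as [l' [Hl' [Hf' Hb3]]]. exists l'. split; auto. split.
        * eapply Forall_impl; [|exact Hf']. intros v Hv. exact (lt_le_trans K HK0 _ _ _ Hv Ht4).
        * apply bitD_iff. apply Ht3. apply bitD_iff. auto.
      + exists l. split; auto. split.
        * apply Forall_forall. intros v Hv. apply (le_lt_trans K HK0 _ z1).
          apply (le_trans K HK0 _ (codeL l)). apply codeL_ge; auto; apply HK0. apply pr_ge_r; apply HK0.
          apply (bit_lt K HK0 EK HE0 HEz HEs HEt); auto.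
        * apply bitD_iff; auto.
    - intros y' Hy' l' Hl' Hf' Hb'. apply bitD_iff in Hb'. destruct (Ht2 _ Hb') as [Hb''|Heq].
      + apply (HC y' Hy' l' Hl').
        * apply Forall_forall. intros v Hv. apply (le_lt_trans K HK0 _ (codeL (y' :: l'))).
          apply codeL_ge. apply HK0. right; auto. apply (bit_lt K HK0 EK HE0 HEz HEs HEt); auto.
        * apply bitD_iff; auto.
      + apply codeL_inj in Heq; [|apply HK0|simpl; rewrite Hl', Hlm; auto]. injection Heq as -> ->.
        apply Hnq1s. exact Hnl. }
  set (DP := fun (D : structure) (env : nat -> D) => exists x s t,
      Asem EK p D s (env 0) x (fun i => env (1 + i)) /\ Bsem EK m D t s (env 0) /\
      Csem EK m nq1 D t (env 0) x (fun i => env (1 + i))).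
  assert (HDP : SDef (S (S n)) DP).
  { eapply SDef_ext. apply SDef_ex. apply SDef_ex. apply SDef_ex.
    apply SDef_and. apply PDef_SDef_S. apply (Adef EK HE0 n p Hp 1 3 2 4).
    apply SDef_and. apply D0_SDef. apply (Bdef EK HE0 m 0 1 3).
    apply SDef_S. apply PDef_SDef_S. apply (Cdef EK HE0 m n nq1 Hnq1 0 3 2 4).
    intros D env. unfold DP. simpl. tauto. }
  assert (HDK : DP K (fun i => f (scons a e i))).
  { exists k, s, t. simpl. split; [|split; auto].
    intros y Hy Hnb Hpk. destruct (in_img y a Hy) as [y0 [<- Hy0]].
    apply (HH y0 Hy0). split; auto. apply HA'; auto. intros Hb. apply Hnb. apply bitD_iff; auto. }
  apply (transfer DP HDP) in HDK. destruct HDK as [x [s0 [t0 [HA0 [HB0 HC0]]]]]. simpl in HA0, HB0, HC0.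
  destruct (Hall x) as [y [Hy [Hpy Hqy]]].
  assert (Hby : bitD EK M s0 y).
  { apply NNPP. intros Hnb. apply (HA0 y Hy Hnb Hpy). }
  destruct (HB0 y Hy Hby) as [l [Hl [Hf Hb]]].
  specialize (HC0 y Hy l Hl Hf Hb). apply Hnq1s in HC0. apply HC0.
  rewrite sat_alls in Hqy. apply Hqy; auto.
Qed.

End Main.


Theorem proposition5p8 (n : nat) (M : structure) (HM : model_IDelta0_exp M) :
  (exists (K : structure) (f : embedding M K),
      model_IDelta0_exp K /\ end_extension f /\ proper_extension f /\
      Sigma_elementary (n + 2) f /\ M_ISigma (n + 1) f) ->
  WR_SigmaPi (n + 1) M.
Proof.
  intros [K [f [HK [He [Hpr [Hel Hmi]]]]]]. split. apply HM.
  replace (n + 2) with (S (S n)) in Hel by lia. replace (n + 1) with (S n) in * by lia.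
  intros p q Hp Hq. eapply main_WR; eauto.
Qed.
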